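(* Let $n\ge2$ and $q=p^h$ with $p$ prime, $h\geq1$. Let $B$ be a minimal blocking set with respect to lines of $PG(n,q)$ such that every line meets $B$ in $1\pmod{p^e}$ points, where $e$ is the largest integer with this property. Assume $p^e>3$ and $\theta_{n-1}<|B|<2q^{n-1}$. Then $$|B|\leq q^{n-1}+\frac{2q^{n-1}}{p^e}.$$
   Context: $\theta_m=(q^{m+1}-1)/(q-1)$. A blocking set with respect to lines is a point set meeting every line. It is minimal if no proper subset is a blocking set. *)

(* Defs.v *)
From HB Require Import structures.
From mathcomp Require Import all_boot all_order all_algebra.
Set Implicit Arguments. Unset Strict Implicit. Unset Printing Implicit Defensive.

(* PG(n,F) for a finite field F: subspaces of F^(n+1) are represented by
   their canonical generating matrices <<A>>%MS (square (n+1)x(n+1)). *)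

Section PG.
Variables (F : finFieldType) (n : nat).

Definition pg_point (P : 'M[F]_(n.+1)) : bool :=
  (\rank P == 1%N) && (<<P>>%MS == P).

Definition pg_line (L : 'M[F]_(n.+1)) : bool :=
  (\rank L == 2%N) && (<<L>>%MS == L).

Definition line_meet (B : {set 'M[F]_(n.+1)}) (L : 'M[F]_(n.+1)) : nat :=
  #|[set P in B | (P <= L)%MS]|.

Definition pg_pointset (B : {set 'M[F]_(n.+1)}) : Prop :=
  forall P, P \in B -> pg_point P.

Definition blocking_set (B : {set 'M[F]_(n.+1)}) : Prop :=
  pg_pointset B /\ forall L, pg_line L -> 0 < line_meet B L.

Definition minimal_blocking_set (B : {set 'M[F]_(n.+1)}) : Prop :=
  blocking_set B /\ forall B' : {set 'M[F]_(n.+1)}, B' \proper B -> ~ blocking_set B'.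

Definition lines_meet_1_mod (B : {set 'M[F]_(n.+1)}) (m : nat) : Prop :=
  forall L, pg_line L -> line_meet B L = 1 %[mod m].

End PG.

Definition theta (q m : nat) : nat := (q ^ m.+1 - 1) %/ (q - 1).

(* Main.v *)
Require Import Defs.
From HB Require Import structures.
From mathcomp Require Import all_boot all_order all_algebra.
From mathcomp Require Import zify ring lra.

Set Implicit Arguments. Unset Strict Implicit. Unset Printing Implicit Defensive.

Section Geo.
Variables (F : finFieldType) (n : nat).
Local Notation M := 'M[F]_(n.+1).
Local Notation V := 'rV[F]_(n.+1).

Lemma card_subsp m (S : 'M[F]_(m, n.+1)) :
  #|[set v : V | (v <= S)%MS]| = #|F| ^ \rank S.
Proof.
have -> : [set v : V | (v <= S)%MS] =
          [set (u *m row_base S)%R | u in [set: 'rV[F]_(\rank S)]].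
  apply/setP => v; rewrite inE; apply/idP/imsetP.
  - move=> vS; have: (v <= row_base S)%MS by rewrite eq_row_base.
    by case/submxP => u ->; exists u; rewrite ?inE.
  - case=> u _ ->; apply: submx_trans (submxMl u _) _.
    by rewrite eq_row_base.
rewrite card_imset; last exact: row_free_inj (row_base_free S).
by rewrite cardsT card_mx mul1n.
Qed.

Lemma point_gen (v : V) : v != 0%R -> pg_point <<v>>%MS.
Proof. by move=> vnz; rewrite /pg_point mxrank_gen rank_rV vnz genmx_id eqxx. Qed.

Lemma point_vec (P : M) (v : V) : pg_point P ->
  ((v <= P)%MS && (v != 0%R)) = (<<v>>%MS == P).
Proof.
move=> /andP[/eqP rP /eqP gP]; apply/idP/eqP.
- case/andP => vP vnz; rewrite -gP; apply/genmxP.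
  have Pv : (P <= v)%MS by rewrite -(mxrank_leqif_sup vP).2 rP rank_rV vnz.
  by apply/andP.
- move=> e; rewrite -e genmxE submx_refl /=.
  by move: rP; rewrite -e mxrank_gen rank_rV; case: (v != 0%R).
Qed.

Lemma count_points m (S : 'M[F]_(m, n.+1)) :
  #|[set P : M | pg_point P && (P <= S)%MS]| * (#|F| - 1) = #|F| ^ \rank S - 1.
Proof.
have cnz : forall m' (S' : 'M[F]_(m', n.+1)),
    #|[set v : V | (v <= S')%MS && (v != 0%R)]| = #|F| ^ \rank S' - 1.
  move=> m' S'; rewrite -card_subsp (cardsD1 0%R [set v : V | (v <= S')%MS]).
  rewrite inE sub0mx add1n subSS subn0; apply: eq_card => v.
  by rewrite !inE andbC.
rewrite -cnz -[RHS]sum1dep_card.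
rewrite (partition_big (fun v : V => <<v>>%MS : M) (fun P : M => pg_point P && (P <= S)%MS)) /=; last first.
  move=> v /andP[vS vnz]; rewrite point_gen //=; by rewrite genmxE.
rewrite -sum1dep_card big_distrl /=; apply: eq_bigr => P /andP[pP PS].
have -> : #|F| - 1 = #|[set v : V | (v <= P)%MS && (v != 0%R)]|.
  have /andP[/eqP rP _] := pP; by rewrite cnz rP expn1.
rewrite mul1n -sum1dep_card; apply: eq_bigl => v.
rewrite -(point_vec v pP); apply/idP/idP.
- case/andP=> vP ->; rewrite (submx_trans vP PS) vP //.
- by case/andP=> /andP[vS ->] /andP[-> _].
Qed.

Lemma rank_point (P : M) : pg_point P -> \rank P = 1.
Proof. by case/andP=> /eqP. Qed.

Lemma line_through (P R : M) : pg_point P -> pg_point R -> P != R ->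
  [set L : M | pg_line L && (P <= L)%MS && (R <= L)%MS] = [set <<(P + R)%MS>>%MS].
Proof.
move=> pP pR PR.
have r2 : \rank (P + R)%MS = 2.
  have le2 : \rank (P + R)%MS <= 2.
    by have := (mxrank_adds_leqif P R).1; rewrite (rank_point pP) (rank_point pR).
  have ge1 : 1 <= \rank (P + R)%MS.
    by rewrite -(rank_point pP); apply: mxrankS; apply: addsmxSl.
  apply/eqP; rewrite eqn_leq le2 /= ltn_neqAle ge1 andbT.
  apply/negP => /eqP r1.
  have e1 : (P == P + R)%MS.
    by rewrite -(mxrank_leqif_eq (addsmxSl P R)).2 (rank_point pP) r1.
  have e2 : (R == P + R)%MS.
    by rewrite -(mxrank_leqif_eq (addsmxSr P R)).2 (rank_point pR) r1.
  move/negP: PR; apply; apply/eqP.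
  have /andP[_ /eqP gP] := pP; have /andP[_ /eqP gR] := pR.
  move/eqmxP: e1 => e1; move/eqmxP: e2 => e2.
  by rewrite -gP -gR; apply/genmxP; apply/eqmxP; apply: eqmx_trans e1 (eqmx_sym e2).
apply/setP => L; rewrite !inE; apply/idP/eqP.
- case/andP=> /andP[/andP[/eqP rL /eqP gL] PL] RL.
  have PRL : (P + R <= L)%MS by rewrite addsmx_sub PL RL.
  rewrite -gL; apply/esym/genmxP; rewrite -(mxrank_leqif_eq PRL).2 r2 rL //.
- move=> ->; rewrite /pg_line mxrank_gen r2 genmx_id eqxx /= !genmxE.
  by rewrite eqxx addsmxSl addsmxSr.
Qed.

Lemma card_line_points (L : M) : 1 < #|F| -> pg_line L ->
  #|[set P : M | pg_point P && (P <= L)%MS]| = #|F|.+1.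
Proof.
move=> q1 /andP[/eqP rL _].
have := count_points L; rewrite rL => h.
have qp : 0 < #|F| - 1 by rewrite subn_gt0.
have e : #|F|.+1 * (#|F| - 1) = #|F| ^ 2 - 1.
  rewrite expnS expn1; nia.
by apply/eqP; rewrite -(eqn_pmul2r qp) h e.
Qed.

Lemma card_all_points : 1 < #|F| ->
  #|[set P : M | pg_point P]| * (#|F| - 1) = #|F| ^ n.+1 - 1.
Proof.
move=> _; have := count_points (1%:M : 'M[F]_(n.+1)).
rewrite mxrank1 => <-; congr (_ * _); apply: eq_card => P.
by rewrite !inE submx1 andbT.
Qed.

Lemma sum_bool (T : finType) (A b : pred T) :
  \sum_(x | A x) (b x : nat) = #|[set x | A x && b x]|.
Proof. by rewrite -sum1dep_card big_mkcondr /=; apply: eq_bigr => x _; case: (b x). Qed.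

Lemma sum_const_dep (T : finType) (A : pred T) c :
  \sum_(x | A x) c = #|[set x | A x]| * c.
Proof. by rewrite -sum1dep_card big_distrl /=; apply: eq_bigr => x _; rewrite mul1n. Qed.

Lemma dc (X : {set M}) (Q : M) : pg_point Q -> (forall P, P \in X -> pg_point P) ->
  \sum_(L | pg_line L && (Q <= L)%MS) #|[set P in X | (P <= L)%MS & P != Q]| = #|X :\ Q|.
Proof.
move=> pQ hX.
transitivity (\sum_(L | pg_line L && (Q <= L)%MS) \sum_(P in X :\ Q) ((P <= L)%MS : nat)).
  apply: eq_bigr => L _; rewrite -sum1dep_card big_mkcond [RHS]big_mkcond /=.
  apply: eq_bigr => P _; rewrite !inE.
  by case: (P \in X); case: (P == Q); case: (P <= L)%MS.
rewrite exchange_big /= -sum1_card; apply: eq_bigr => P; rewrite !inE => /andP[PQ PX].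
rewrite sum_bool (line_through pQ (hX _ PX)) ?cards1 //.
by rewrite eq_sym.
Qed.

Lemma F1 (B : {set M}) (Q : M) : (forall P, P \in B -> pg_point P) -> pg_point Q -> Q \notin B ->
  \sum_(L | pg_line L && (Q <= L)%MS) line_meet B L = #|B|.
Proof.
move=> hB pQ QB.
rewrite (cardsD1 Q B) (negbTE QB) add0n -(dc pQ hB).
apply: eq_bigr => L _; rewrite /line_meet; apply: eq_card => P; rewrite !inE.
case: (eqVneq P Q) => [->|_]; first by rewrite (negbTE QB).
by rewrite andbT.
Qed.

Lemma F2 (Q : M) : 1 < #|F| -> pg_point Q ->
  #|[set L : M | pg_line L && (Q <= L)%MS]| * #|F| = #|[set P : M | pg_point P]| - 1.
Proof.
move=> q1 pQ.
rewrite (cardsD1 Q [set P : M | pg_point P]) inE pQ add1n subSS subn0.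
rewrite -(@dc [set P : M | pg_point P] Q pQ); last by move=> P; rewrite inE.
rewrite -sum_const_dep; apply: eq_bigr => L /andP[lL QL].
have := card_line_points q1 lL; rewrite (cardsD1 Q) inE pQ QL /= add1n => [[<-]].
apply: eq_card => P; rewrite !inE.
by case: (pg_point P); case: (P == Q); case: (P <= L)%MS.
Qed.

Lemma F3 (B : {set M}) : (forall P, P \in B -> pg_point P) ->
  \sum_(L | pg_line L) line_meet B L * (line_meet B L - 1) = #|B| * (#|B| - 1).
Proof.
move=> hB.
transitivity (\sum_(L | pg_line L) \sum_(Q | (Q \in B) && (Q <= L)%MS)
                 #|[set P in B | (P <= L)%MS & P != Q]|).
  apply: eq_bigr => L _; rewrite /line_meet.
  rewrite (eq_bigr (fun _ => #|[set P in B | (P <= L)%MS]| - 1)); last first.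
    move=> Q /andP[QB QL]; rewrite (cardsD1 Q [set P in B | (P <= L)%MS]) !inE QB QL /= add1n subSS subn0.
    apply: eq_card => P; rewrite !inE.
    by case: (P \in B); case: (P == Q); case: (P <= L)%MS.
  by rewrite sum_const_dep.
rewrite (exchange_big_dep (fun Q => Q \in B)) /=; last by move=> L Q _ /andP[].
rewrite [RHS](_ : _ = \sum_(Q | Q \in B) (#|B| - 1)); last first.
  by rewrite sum_const_dep; congr (_ * _); apply: eq_card => x; rewrite inE.
apply: eq_bigr => Q QB.
rewrite (cardsD1 Q B) QB /= add1n subSS subn0 -(dc (hB _ QB) hB).
by [].
Qed.

Lemma F4 (B : {set M}) T : 1 < #|F| -> (forall P, P \in B -> pg_point P) ->
  (forall L, pg_line L -> 0 < line_meet B L) ->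
  (forall Q, pg_point Q -> #|[set L : M | pg_line L && (Q <= L)%MS]| = T) ->
  \sum_(L | pg_line L) (line_meet B L - 1) * (#|F|.+1 - line_meet B L)
    = (#|[set P : M | pg_point P]| - #|B|) * (#|B| - T).
Proof.
move=> q1 hB hbl hT.
transitivity (\sum_(L | pg_line L)
   \sum_(Q | (pg_point Q && (Q \notin B)) && (Q <= L)%MS) (line_meet B L - 1)).
  apply: eq_bigr => L lL; rewrite sum_const_dep mulnC; congr (_ * _).
  have := card_line_points q1 lL; rewrite -(cardsID B) => <-.
  rewrite /line_meet.
  have e1 : [set P : M | pg_point P && (P <= L)%MS] :&: B = [set P in B | (P <= L)%MS].
    apply/setP => P; rewrite !inE; case PB: (P \in B); rewrite ?andbT ?andbF //=.
    by rewrite (hB _ PB).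
  have e2 : [set P : M | pg_point P && (P <= L)%MS] :\: B =
            [set Q : M | (pg_point Q && (Q \notin B)) && (Q <= L)%MS].
    apply/setP => P; rewrite !inE.
    by case: (P \in B); case: (pg_point P); case: (P <= L)%MS.
  by rewrite e1 e2 addKn.
rewrite (exchange_big_dep (fun Q => pg_point Q && (Q \notin B))) /=; last first.
  by move=> L Q _ /andP[].
have cnb : #|[set Q : M | pg_point Q && (Q \notin B)]| = #|[set P : M | pg_point P]| - #|B|.
  rewrite -(cardsID B [set P : M | pg_point P]).
  have -> : [set P : M | pg_point P] :&: B = B.
    apply/setP => P; rewrite !inE; case PB: (P \in B); rewrite ?andbT ?andbF //.
    by rewrite hB.
  rewrite addKn; apply: eq_card => P; rewrite !inE andbC //.
rewrite -cnb -sum_const_dep; apply: eq_bigr => Q /andP[pQ QB].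
rewrite (eq_bigl (fun L => pg_line L && (Q <= L)%MS)); last first.
  by move=> L; rewrite pQ QB.
have h1 := F1 hB pQ QB; have h2 := hT Q pQ; rewrite -sum1dep_card in h2.
have : \sum_(L | pg_line L && (Q <= L)%MS) (line_meet B L - 1)
     + \sum_(L | pg_line L && (Q <= L)%MS) 1 = #|B|.
  rewrite -big_split /= -h1; apply: eq_bigr => L /andP[lL _].
  by rewrite subnK // hbl.
by rewrite h2 => <-; rewrite addnK.
Qed.

End Geo.

Unset Implicit Arguments. Set Strict Implicit.

Import Order.TTheory GRing.Theory Num.Theory.

Section Alg.
Local Open Scope ring_scope.

Definition mono {R : realFieldType} (u v w : R) (c i j l : nat) : R := c%:R * (u ^+ i * v ^+ j * w ^+ l).
Lemma mono_ge0 {R : realFieldType} (u v w : R) c i j l : 0 <= u -> 0 <= v -> 0 <= w -> 0 <= mono u v w c i j l.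
Proof. by move=> hu hv hw; rewrite /mono !mulr_ge0 ?exprn_ge0 ?ler0n. Qed.

Lemma polyG {R : realFieldType} (u v w : R) : 0 <= u -> 0 <= v -> 0 <= w -> 0 <= mono u v w (((1*10+0)*10+3)*10+5) 0 0 0 + mono u v w (((1*10+7)*10+2)*10+4) 0 0 1 + mono u v w ((7*10+1)*10+6) 0 0 2 + mono u v w (((1*10+2)*10+8)*10+3) 0 1 0 + mono u v w (((2*10+2)*10+6)*10+4) 0 1 1 + mono u v w ((9*10+9)*10+6) 0 1 2 + mono u v w ((5*10+7)*10+6) 0 2 0 + mono u v w (((1*10+0)*10+6)*10+6) 0 2 1 + mono u v w ((4*10+9)*10+2) 0 2 2 + mono u v w ((1*10+1)*10+2) 0 3 0 + mono u v w ((2*10+1)*10+6) 0 3 1 + mono u v w ((1*10+0)*10+4) 0 3 2 + mono u v w 8 0 4 0 + mono u v w (1*10+6) 0 4 1 + mono u v w 8 0 4 2 + mono u v w ((3*10+2)*10+2) 1 0 0 + mono u v w ((5*10+6)*10+9) 1 0 1 + mono u v w ((2*10+5)*10+0) 1 0 2 + mono u v w ((3*10+5)*10+2) 1 1 0 + mono u v w ((6*10+5)*10+3) 1 1 1 + mono u v w ((3*10+0)*10+2) 1 1 2 + mono u v w ((1*10+1)*10+6) 1 2 0 + mono u v w ((2*10+2)*10+4) 1 2 1 + mono u v w ((1*10+0)*10+8) 1 2 2 + mono u v w (1*10+2) 1 3 0 + mono u v w (2*10+4) 1 3 1 + mono u v w (1*10+2) 1 3 2 + mono u v w (3*10+2)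 2 0 0 + mono u v w (6*10+0) 2 0 1 + mono u v w (2*10+8) 2 0 2 + mono u v w (3*10+2) 2 1 0 + mono u v w (6*10+2) 2 1 1 + mono u v w (3*10+0) 2 1 2 + mono u v w 6 2 2 0 + mono u v w (1*10+2) 2 2 1 + mono u v w 6 2 2 2 + mono u v w 1 3 0 0 + mono u v w 2 3 0 1 + mono u v w 1 3 0 2 + mono u v w 1 3 1 0 + mono u v w 2 3 1 1 + mono u v w 1 3 1 2.
Proof. move=> hu hv hw; repeat match goal with |- is_true (0 <= _ + _) => apply: addr_ge0 end; exact: mono_ge0. Qed.

Lemma mono_gt0 {R : realFieldType} (u v w : R) c : (0 < c)%N -> 0 < mono u v w c 0 0 0.
Proof. by move=> c0; rewrite /mono !expr0 !mulr1 ltr0n. Qed.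

Lemma pos_add {R : realFieldType} (x y : R) : 0 <= x -> 0 < y -> 0 < x + y.
Proof. move=> *; lra. Qed.

Lemma polyH {R : realFieldType} (u v w : R) : 0 <= u -> 0 <= v -> 0 <= w -> 0 < mono u v w (((9*10+5)*10+8)*10+4) 0 0 1 + mono u v w (((3*10+6)*10+4)*10+4) 0 0 2 + mono u v w (((8*10+6)*10+4)*10+8) 0 1 0 + mono u v w ((((1*10+4)*10+3)*10+0)*10+0) 0 1 1 + mono u v w (((5*10+8)*10+5)*10+2) 0 1 2 + mono u v w (((4*10+6)*10+6)*10+7) 0 2 0 + mono u v w (((8*10+1)*10+7)*10+2) 0 2 1 + mono u v w (((3*10+5)*10+5)*10+5) 0 2 2 + mono u v w (((1*10+2)*10+2)*10+7) 0 3 0 + mono u v w (((2*10+2)*10+5)*10+9) 0 3 1 + mono u v w (((1*10+0)*10+3)*10+6) 0 3 2 + mono u v w ((1*10+5)*10+8) 0 4 0 + mono u v w ((3*10+0)*10+4) 0 4 1 + mono u v w ((1*10+4)*10+6) 0 4 2 + mono u v w 8 0 5 0 + mono u v w (1*10+6) 0 5 1 + mono u v w 8 0 5 2 + mono u v w (((1*10+8)*10+4)*10+0) 1 0 0 + mono u v w (((3*10+0)*10+7)*10+2) 1 0 1 + mono u v w (((1*10+2)*10+6)*10+0) 1 0 2 + mono u v w (((2*10+3)*10+2)*10+4) 1 1 0 + mono u v w (((4*10+1)*10+1)*10+8) 1 1 1 + mono u v w (((1*10+8)*10+1)*10+0) 1 1 2 + mono u v w (((1*10+0)*10+0)*10+6)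 1 2 0 + mono u v w (((1*10+8)*10+7)*10+0) 1 2 1 + mono u v w ((8*10+6)*10+6) 1 2 2 + mono u v w ((1*10+8)*10+3) 1 3 0 + mono u v w ((3*10+5)*10+4) 1 3 1 + mono u v w ((1*10+7)*10+1) 1 3 2 + mono u v w (1*10+2) 1 4 0 + mono u v w (2*10+4) 1 4 1 + mono u v w (1*10+2) 1 4 2 + mono u v w ((1*10+6)*10+4) 2 0 0 + mono u v w ((2*10+9)*10+6) 2 0 1 + mono u v w ((1*10+3)*10+2) 2 0 2 + mono u v w ((2*10+0)*10+2) 2 1 0 + mono u v w ((3*10+8)*10+2) 2 1 1 + mono u v w ((1*10+8)*10+0) 2 1 2 + mono u v w (6*10+4) 2 2 0 + mono u v w ((1*10+2)*10+5) 2 2 1 + mono u v w (6*10+1) 2 2 2 + mono u v w 6 2 3 0 + mono u v w (1*10+2) 2 3 1 + mono u v w 6 2 3 2 + mono u v w 4 3 0 0 + mono u v w 8 3 0 1 + mono u v w 4 3 0 2 + mono u v w 6 3 1 0 + mono u v w (1*10+2) 3 1 1 + mono u v w 6 3 1 2 + mono u v w 1 3 2 0 + mono u v w 2 3 2 1 + mono u v w 1 3 2 2 + mono u v w (((6*10+1)*10+9)*10+2) 0 0 0.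
Proof.
move=> hu hv hw.
apply: pos_add; last by apply: mono_gt0.
repeat match goal with |- is_true (0 <= _ + _) => apply: addr_ge0 end; exact: mono_ge0.
Qed.

Definition gfun {R : realFieldType} (q a s b : R) :=
  (q - a) * b * (b - 1) - (1 + a) * (b - (q * s + 1)) * (q * q * s + q + 1 - b).

Lemma gX {R : realFieldType} (q a s : R) : 4 <= a -> 2 * a <= q -> 1 <= s ->
  gfun q a s (2 * ((q - 1) * s + 1)) <= 0.
Proof.
move=> ha hq hs.
have -> : gfun q a s (2 * ((q - 1) * s + 1)) =
  - (let u := q - 2 * a in let v := a - 4 in let w := s - 1 in mono u v w (((1*10+0)*10+3)*10+5) 0 0 0 + mono u v w (((1*10+7)*10+2)*10+4) 0 0 1 + mono u v w ((7*10+1)*10+6) 0 0 2 + mono u v w (((1*10+2)*10+8)*10+3) 0 1 0 + mono u v w (((2*10+2)*10+6)*10+4) 0 1 1 + mono u v w ((9*10+9)*10+6) 0 1 2 + mono u v w ((5*10+7)*10+6) 0 2 0 + mono u v w (((1*10+0)*10+6)*10+6) 0 2 1 + mono u v w ((4*10+9)*10+2) 0 2 2 + mono u v w ((1*10+1)*10+2) 0 3 0 + mono u v w ((2*10+1)*10+6) 0 3 1 + mono u v w ((1*10+0)*10+4) 0 3 2 + mono u v w 8 0 4 0 + mono u v w (1*10+6) 0 4 1 + mono u v w 8 0 4 2 + mono u v w ((3*10+2)*10+2) 1 0 0 + mono u v w ((5*10+6)*10+9) 1 0 1 + mono u v w ((2*10+5)*10+0) 1 0 2 + mono u v w ((3*10+5)*10+2)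 1 1 0 + mono u v w ((6*10+5)*10+3) 1 1 1 + mono u v w ((3*10+0)*10+2) 1 1 2 + mono u v w ((1*10+1)*10+6) 1 2 0 + mono u v w ((2*10+2)*10+4) 1 2 1 + mono u v w ((1*10+0)*10+8) 1 2 2 + mono u v w (1*10+2) 1 3 0 + mono u v w (2*10+4) 1 3 1 + mono u v w (1*10+2) 1 3 2 + mono u v w (3*10+2) 2 0 0 + mono u v w (6*10+0) 2 0 1 + mono u v w (2*10+8) 2 0 2 + mono u v w (3*10+2) 2 1 0 + mono u v w (6*10+2) 2 1 1 + mono u v w (3*10+0) 2 1 2 + mono u v w 6 2 2 0 + mono u v w (1*10+2) 2 2 1 + mono u v w 6 2 2 2 + mono u v w 1 3 0 0 + mono u v w 2 3 0 1 + mono u v w 1 3 0 2 + mono u v w 1 3 1 0 + mono u v w 2 3 1 1 + mono u v w 1 3 1 2).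
  rewrite /gfun /mono /=; ring.
rewrite oppr_le0; apply: polyG; lra.
Qed.

Lemma Hval {R : realFieldType} (q a s c : R) : 4 <= a -> 2 * a <= q -> 1 <= s ->
  c = ((q - 1) * s + 1) * (a + 2) ->
  0 < - ((q - a) * c * (c - a) - (1 + a) * (c - a * (q * s + 1)) * (a * (q * q * s + q + 1) - c)).
Proof.
move=> ha hq hs hc.
have e : - ((q - a) * c * (c - a) - (1 + a) * (c - a * (q * s + 1)) * (a * (q * q * s + q + 1) - c))
  = (let u := q - 2 * a in let v := a - 4 in let w := s - 1 in mono u v w (((9*10+5)*10+8)*10+4) 0 0 1 + mono u v w (((3*10+6)*10+4)*10+4) 0 0 2 + mono u v w (((8*10+6)*10+4)*10+8) 0 1 0 + mono u v w ((((1*10+4)*10+3)*10+0)*10+0) 0 1 1 + mono u v w (((5*10+8)*10+5)*10+2) 0 1 2 + mono u v w (((4*10+6)*10+6)*10+7) 0 2 0 + mono u v w (((8*10+1)*10+7)*10+2) 0 2 1 + mono u v w (((3*10+5)*10+5)*10+5) 0 2 2 + mono u v w (((1*10+2)*10+2)*10+7) 0 3 0 + mono u v w (((2*10+2)*10+5)*10+9) 0 3 1 + mono u v w (((1*10+0)*10+3)*10+6) 0 3 2 + mono u v w ((1*10+5)*10+8) 0 4 0 + mono u v w ((3*10+0)*10+4) 0 4 1 + mono u v w ((1*10+4)*10+6) 0 4 2 + mono u v w 8 0 5 0 + mono u v w (1*10+6) 0 5 1 + mono u v w 8 0 5 2 + mono u v w (((1*10+8)*10+4)*10+0) 1 0 0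 + mono u v w (((3*10+0)*10+7)*10+2) 1 0 1 + mono u v w (((1*10+2)*10+6)*10+0) 1 0 2 + mono u v w (((2*10+3)*10+2)*10+4) 1 1 0 + mono u v w (((4*10+1)*10+1)*10+8) 1 1 1 + mono u v w (((1*10+8)*10+1)*10+0) 1 1 2 + mono u v w (((1*10+0)*10+0)*10+6) 1 2 0 + mono u v w (((1*10+8)*10+7)*10+0) 1 2 1 + mono u v w ((8*10+6)*10+6) 1 2 2 + mono u v w ((1*10+8)*10+3) 1 3 0 + mono u v w ((3*10+5)*10+4) 1 3 1 + mono u v w ((1*10+7)*10+1) 1 3 2 + mono u v w (1*10+2) 1 4 0 + mono u v w (2*10+4) 1 4 1 + mono u v w (1*10+2) 1 4 2 + mono u v w ((1*10+6)*10+4) 2 0 0 + mono u v w ((2*10+9)*10+6) 2 0 1 + mono u v w ((1*10+3)*10+2) 2 0 2 + mono u v w ((2*10+0)*10+2) 2 1 0 + mono u v w ((3*10+8)*10+2) 2 1 1 + mono u v w ((1*10+8)*10+0) 2 1 2 + mono u v w (6*10+4) 2 2 0 + mono u v w ((1*10+2)*10+5) 2 2 1 + mono u v w (6*10+1) 2 2 2 + mono u v w 6 2 3 0 + mono u v w (1*10+2) 2 3 1 + mono u v w 6 2 3 2 + mono u v w 4 3 0 0 + mono u v w 8 3 0 1 + mono u v w 4 3 0 2 + mono u v w 6 3 1 0 + mono u v w (1*10+2) 3 1 1 + mono u v w 6 3 1 2 + mono u v w 1 3 2 0 + mono u v w 2 3 2 1 + mono u v w 1 3 2 2 + mono u v w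 (((6*10+1)*10+9)*10+2) 0 0 0).
  rewrite hc /mono /=; ring.
rewrite e; apply: polyH; lra.
Qed.

Lemma gb0 {R : realFieldType} (q a s : R) : 4 <= a -> 2 * a <= q -> 1 <= s ->
  gfun q a s (((q - 1) * s + 1) * (a + 2) / a) < 0.
Proof.
move=> ha hq hs.
have a0 : a != 0 by apply/eqP => a0; rewrite a0 in ha; lra.
set b0 := ((q - 1) * s + 1) * (a + 2) / a.
have e1 : gfun q a s b0 * (a * a) = (q - a) * (a * b0) * (a * b0 - a)
   - (1 + a) * (a * b0 - a * (q * s + 1)) * (a * (q * q * s + q + 1) - a * b0).
  rewrite /gfun; ring.
have e2 : a * b0 = ((q - 1) * s + 1) * (a + 2) by rewrite /b0 mulrC divfK.
have := Hval q a s (a * b0) ha hq hs e2; rewrite -e1 oppr_gt0 => h.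
have haa : 0 < a * a by nra.
by rewrite -(pmulr_llt0 _ haa).
Qed.

Lemma final_alg {R : realFieldType} (q a s b : R) : 4 <= a -> 2 * a <= q -> 1 <= s ->
  q * s + 1 < b -> b < 2 * ((q - 1) * s + 1) -> 0 <= gfun q a s b ->
  b <= ((q - 1) * s + 1) + 2 * ((q - 1) * s + 1) / a.
Proof.
move=> ha hq hs hT hX hg.
have gx := gX q a s ha hq hs.
have g0 := gb0 q a s ha hq hs.
move: hX gx g0; set Q := (q - 1) * s + 1 => hX gx g0.
have a0 : 0 < a by lra.
have -> : Q + 2 * Q / a = Q * (a + 2) / a by field; lra.
rewrite leNgt; apply/negP => hb.
move: g0 hb; set b0 := Q * (a + 2) / a => g0 hb.
have hQ : 1 <= Q by rewrite /Q; nra.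
have hXb0 : b0 < 2 * Q.
  rewrite /b0 ltr_pdivrMr //; nra.
have id : (2 * Q - b0) * gfun q a s b = (2 * Q - b) * gfun q a s b0 + (b - b0) * gfun q a s (2 * Q)
    + (q + 1) * (b - b0) * (b - 2 * Q) * (2 * Q - b0).
  rewrite /gfun; ring.
have : 0 <= (2 * Q - b0) * gfun q a s b by apply: mulr_ge0 => //; lra.
rewrite id.
have h1 : (2 * Q - b) * gfun q a s b0 < 0 by rewrite pmulr_rlt0 //; lra.
have h2 : (b - b0) * gfun q a s (2 * Q) <= 0 by rewrite pmulr_rle0 //; lra.
have h3 : (q + 1) * (b - b0) * (b - 2 * Q) * (2 * Q - b0) <= 0.
  have p1 : 0 < (q + 1) * (b - b0) by apply: mulr_gt0; lra.
  have p2 : 0 < (q + 1) * (b - b0) * (2 * Q - b0) by apply: mulr_gt0; lra.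
  have -> : (q + 1) * (b - b0) * (b - 2 * Q) * (2 * Q - b0) =
    ((q + 1) * (b - b0) * (2 * Q - b0)) * (b - 2 * Q) by ring.
  rewrite pmulr_rle0 //; lra.
lra.
Qed.


End Alg.

Lemma L_s1 {R : realFieldType} (q Q s : R) : (1 < q -> q <= Q -> (q - 1) * s + 1 = Q -> 1 <= s)%R.
Proof. move=> h1 h2 h3; nra. Qed.

Lemma L_contra {R : realFieldType} (q a s b : R) : (1 < q -> 1 <= s -> q <= a ->
  q * s + 1 < b -> b < 2 * ((q - 1) * s + 1) -> 0 <= gfun q a s b -> False)%R.
Proof.
move=> h1 h2 h3 h4 h5; rewrite /gfun.
have p1 : (0 < (1 + a) * (b - (q * s + 1)) * (q * q * s + q + 1 - b))%R.
  apply: mulr_gt0; first (apply: mulr_gt0; lra).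
  have : (0 <= (q - 1) * (q - 1) * s)%R by apply: mulr_ge0; [nra | lra].
  lra.
have p2 : (0 <= (a - q) * (b * (b - 1)))%R.
  apply: mulr_ge0; first lra.
  apply: mulr_ge0; nra.
have -> : ((q - a) * b * (b - 1) = - ((a - q) * (b * (b - 1))))%R by ring.
lra.
Qed.

Theorem theorem2 (n p h e : nat) (F : finFieldType) (B : {set 'M[F]_(n.+1)}) :
  2 <= n -> prime p -> 1 <= h -> #|F| = p ^ h ->
  minimal_blocking_set B ->
  lines_meet_1_mod B (p ^ e) ->
  (forall e', lines_meet_1_mod B (p ^ e') -> e' <= e) ->
  3 < p ^ e ->
  theta (p ^ h) n.-1 < #|B| < 2 * (p ^ h) ^ n.-1 ->
  ((#|B|%:R : rat) <= ((p ^ h) ^ n.-1)%:R + 2%:R * ((p ^ h) ^ n.-1)%:R / (p ^ e)%:R)%R.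
Proof.
move=> n2 pp h1 cF [[hB hbl] _] hmod _ a3 /andP[hth hb2].
rewrite -cF in hth hb2 *.
have p2 := prime_gt1 pp.
have q1 : 1 < #|F|.
  rewrite cF; apply: (leq_trans p2); rewrite -{1}(expn1 p); apply: leq_pexp2l => //; lia.
have q0 : 0 < #|F| by lia.
have [Q0 Q0B] : exists Q0, Q0 \in B by apply/set0Pn; rewrite -card_gt0; lia.
set T := #|[set L : 'M[F]_(n.+1) | pg_line L && (Q0 <= L)%MS]|.
have hT : forall Q, pg_point Q -> #|[set L : 'M[F]_(n.+1) | pg_line L && (Q <= L)%MS]| = T.
  move=> Q pQ; apply/eqP; rewrite -(eqn_pmul2r q0) (F2 q1 pQ) (F2 q1 (hB _ Q0B)) //.
have E1 := F3 hB.
have E2 := F4 q1 hB hbl hT.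
have hN := card_all_points n q1.
have hTq := F2 q1 (hB _ Q0B); rewrite -/T in hTq.
set N := #|[set P : 'M[F]_(n.+1) | pg_point P]| in hN hTq E2.
set b := #|B| in hth hb2 E1 E2 *.
set q := #|F| in q1 q0 hN hTq E2 hth hb2 *.
set a := p ^ e in hmod a3 *.
set x := fun L => line_meet B L - 1.
have hx1 : forall L, pg_line L -> x L * a <= x L * x L.
  move=> L lL; have i1 := hbl L lL; have := hmod L lL.
  rewrite /x; move: (line_meet B L) i1 => i i1.
  rewrite -(subnK i1) addnK; move: (i - 1) => j hj.
  have : (j + 1 == 0 + 1 %[mod a]) by rewrite add0n; apply/eqP.
  rewrite eqn_modDr mod0n => /eqP md.
  case: (posnP j) => [-> //|pos]; rewrite leq_mul2l; apply/orP; right.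
  by apply: dvdn_leq => //; rewrite /dvdn md.
have hxq : forall L, pg_line L -> x L <= q.
  move=> L lL; rewrite /x leq_subLR add1n -(card_line_points q1 lL) /line_meet.
  apply: subset_leq_card; apply/subsetP => P; rewrite !inE => /andP[PB PL].
  by rewrite hB.
have E1' : \sum_(L | pg_line L) (x L * x L + x L) = b * (b - 1).
  rewrite -E1; apply: eq_bigr => L lL; rewrite /x.
  have i1 := hbl L lL; move: (line_meet B L) i1 => i i1.
  by rewrite -(subnK i1) addnK mulnDl mul1n.
have E2' : \sum_(L | pg_line L) (x L * (q - x L)) = (N - b) * (b - T).
  rewrite -E2; apply: eq_bigr => L lL; rewrite /x.
  have i1 := hbl L lL; move: (line_meet B L) i1 => i i1.
  by rewrite -(subnK i1) addnK addn1 subSS.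
set S1 := \sum_(L | pg_line L) x L.
set S2 := \sum_(L | pg_line L) x L * x L.
have hS12 : S2 + S1 = b * (b - 1) by rewrite -E1' big_split.
have hS2R : (N - b) * (b - T) + S2 = q * S1.
  rewrite -E2' -big_split big_distrr /=; apply: eq_bigr => L lL.
  have := hxq L lL; move: (x L) => j jq.
  by rewrite mulnBr subnK ?leq_mul // mulnC.
have haS : S1 * a <= S2.
  rewrite big_distrl /=; apply: leq_sum => L lL; exact: hx1.
have bN : b <= N.
  apply: subset_leq_card; apply/subsetP => P PB; rewrite inE; exact: hB.
have N1 : 1 <= N.
  have : Q0 \in [set P : 'M[F]_(n.+1) | pg_point P] by rewrite inE hB.
  by move=> H; rewrite /N card_gt0; apply/set0Pn; exists Q0.
set Q := q ^ n.-1.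
have hQq : q <= Q by rewrite /Q -{1}(expn1 q); apply: leq_pexp2l => //; lia.
have hqn : q ^ n.+1 = q * (q * Q) by rewrite /Q -!expnS; congr (_ ^ _); lia.
rewrite hqn in hN.
have hTqr : (T%:R * q%:R = N%:R - 1 :> rat)%R by rewrite -natrM hTq natrB.
have hNr : (N%:R * (q%:R - 1) = q%:R * (q%:R * Q%:R) - 1 :> rat)%R.
  by rewrite -!natrM -(natrB _ (ltnW q1)) -natrM hN natrB //; nia.
have TQr : (T%:R * (q%:R - 1) = q%:R * Q%:R - 1 :> rat)%R.
  have qr0 : (q%:R != 0 :> rat)%R by rewrite pnatr_eq0; lia.
  have : ((T%:R * (q%:R - 1) - (q%:R * Q%:R - 1)) * q%:R = 0 :> rat)%R.
    transitivity ((T%:R * q%:R) * (q%:R - 1) - (q%:R * (q%:R * Q%:R) - q%:R) : rat)%R.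
      by ring.
    rewrite hTqr.
    transitivity (N%:R * (q%:R - 1) - (q%:R * (q%:R * Q%:R) - 1) : rat)%R.
      by ring.
    by rewrite hNr subrr.
  by move/eqP; rewrite mulf_eq0 (negbTE qr0) orbF subr_eq0 => /eqP.
have TQ : T * (q - 1) = q * Q - 1.
  apply/eqP; rewrite -(eqr_nat rat) natrM !natrB ?natrM ?TQr //; rewrite muln_gt0 q0 /=; lia.

have NT : N = T * q + 1 by lia.
have Tb : T < b.
  move: hth; rewrite /theta expnS -/Q.
  rewrite -TQ mulnK //; lia.
have b1 : 1 <= b by lia.
have NTr : (N%:R = T%:R * q%:R + 1 :> rat)%R by rewrite NT natrD natrM.
set sr : rat := (T%:R - Q%:R)%R.
have eT : (q%:R * sr + 1 = T%:R :> rat)%R.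
  apply/eqP; rewrite -subr_eq0.
  have -> : (q%:R * sr + 1 - T%:R = T%:R * (q%:R - 1) - (q%:R * Q%:R - 1) :> rat)%R.
    by rewrite /sr; ring.
  by rewrite TQr subrr.
have eQ : ((q%:R - 1) * sr + 1 = Q%:R :> rat)%R.
  apply/eqP; rewrite -subr_eq0.
  have -> : ((q%:R - 1) * sr + 1 - Q%:R = T%:R * (q%:R - 1) - (q%:R * Q%:R - 1) :> rat)%R.
    by rewrite /sr; ring.
  by rewrite TQr subrr.
have eN : (q%:R * q%:R * sr + q%:R + 1 = N%:R :> rat)%R.
  by rewrite NTr -eT; ring.
have qr1 : (1 < q%:R :> rat)%R by rewrite ltr1n.
have Qq : (q%:R <= Q%:R :> rat)%R by rewrite ler_nat.
have hs1 : (1 <= sr)%R by exact: (@L_s1 _ _ _ _ qr1 Qq eQ).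
have hTb : (q%:R * sr + 1 < b%:R :> rat)%R by rewrite eT ltr_nat.
have hbX : (b%:R < 2 * ((q%:R - 1) * sr + 1) :> rat)%R.
  rewrite eQ; have : (b%:R < (2 * Q)%:R :> rat)%R by rewrite ltr_nat.
  by rewrite natrM.
have ha4 : (4 <= a%:R :> rat)%R.
  have : (4%:R <= a%:R :> rat)%R by rewrite ler_nat.
  done.
have hS12r : (S2%:R + S1%:R = b%:R * (b%:R - 1) :> rat)%R.
  by rewrite -natrD hS12 natrM natrB.
have hS2Rr : ((N%:R - b%:R) * (b%:R - T%:R) + S2%:R = q%:R * S1%:R :> rat)%R.
  have := congr1 (fun k : nat => (k%:R : rat)) hS2R; rewrite /= natrD !natrM !natrB //; exact: ltnW.
have haSr : (S1%:R * a%:R <= S2%:R :> rat)%R by rewrite -natrM ler_nat.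
have hg : (0 <= gfun q%:R a%:R sr b%:R :> rat)%R.
  rewrite /gfun eN eT.
  have e1 : ((q%:R - a%:R) * b%:R * (b%:R - 1) = (q%:R - a%:R) * (S2%:R + S1%:R) :> rat)%R.
    by rewrite hS12r; ring.
  have e2 : ((1 + a%:R) * (b%:R - T%:R) * (N%:R - b%:R) = (1 + a%:R) * (q%:R * S1%:R - S2%:R) :> rat)%R.
    by rewrite -hS2Rr; ring.
  rewrite e1 e2.
  have -> : ((q%:R - a%:R) * (S2%:R + S1%:R) - (1 + a%:R) * (q%:R * S1%:R - S2%:R)
     = (q%:R + 1) * (S2%:R - S1%:R * a%:R) :> rat)%R by ring.
  apply: mulr_ge0; lra.
case: (ltnP e h) => eh.
  have hpe : p ^ e.+1 <= p ^ h by apply: leq_pexp2l; [exact: prime_gt0 | exact: eh].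
  rewrite expnSr -cF -/a -/q in hpe.
  have h2a : 2 * a <= q.
    apply: leq_trans hpe; by rewrite mulnC leq_mul2l p2 orbT.
  have h2ar : (2 * a%:R <= q%:R :> rat)%R.
    have : ((2 * a)%:R <= q%:R :> rat)%R by rewrite ler_nat.
    by rewrite natrM.
  have := final_alg q%:R a%:R sr b%:R ha4 h2ar hs1 hTb hbX hg.
  by rewrite eQ.
have hpe : p ^ h <= p ^ e by apply: leq_pexp2l; [exact: prime_gt0 | exact: eh].
rewrite -cF -/a -/q in hpe.
have qa : (q%:R <= a%:R :> rat)%R by rewrite ler_nat.
by have := @L_contra _ _ _ _ _ qr1 hs1 qa hTb hbX hg.
Qed.
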